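(* Let $d\ge2$, $\gamma\ge2d$ and $v\in\Lambda_\gamma=\{0,\dots,\gamma-1\}^{\mathbb Z^d}$. The following are equivalent: (1) $v\in\mathcal R_\infty^{(\gamma)}$; (2) for every nonzero $h\in R_d$ with all coefficients in $\{0,1\}$, there is $\mathbf n\in\mathrm{supp}(h)$ with $(f^{(d,\gamma)}\cdot h)_{\mathbf n}+v_{\mathbf n}\ge\gamma$; (3) for every $h\in R_d$ having at least one positive coefficient, there is $\mathbf n$ with $h_{\mathbf n}>0$ and $(f^{(d,\gamma)}\cdot h)_{\mathbf n}+v_{\mathbf n}\ge\gamma$. Furthermore, if $v,v'\in\mathcal R_\infty^{(\gamma)}$ and $0\ne v-v'\in R_d$, then $v-v'\notin f^{(d,\gamma)}\cdot R_d$.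
   Context: $R_d=\mathbb Z[u_1^{\pm1},\dots,u_d^{\pm1}]$, identified with finitely supported integer sequences on $\mathbb Z^d$; $\mathrm{supp}(h)=\{\mathbf n:h_{\mathbf n}\ne0\}$; $(a\cdot b)_{\mathbf n}=\sum_{\mathbf k}a_{\mathbf k}b_{\mathbf n-\mathbf k}$. $f^{(d,\gamma)}=\gamma-\sum_{i=1}^d(u_i+u_i^{-1})$. For a nonempty $F\subset\mathbb Z^d$ and $\mathbf n\in F$, $\mathsf N_F(\mathbf n)=|F\cap\{\mathbf n\pm\mathbf e^{(i)}:i=1,\dots,d\}|$ ($\mathbf e^{(i)}$ the unit vectors). The sandpile model with parameter $\gamma$ is $\mathcal R^{(\gamma)}_\infty=\{v\in\Lambda_\gamma:$ for every finite nonempty $F\subset\mathbb Z^d$ there is $\mathbf n\in F$ with $v_{\mathbf n}\ge\mathsf N_F(\mathbf n)\}$ (the recurrent configurations). *)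

(* Defs.v *)
From HB Require Import structures.
From mathcomp Require Import all_boot all_order all_algebra.
Set Implicit Arguments. Unset Strict Implicit. Unset Printing Implicit Defensive.
Import Order.TTheory GRing.Theory Num.Theory.
Local Open Scope ring_scope.

Definition pt (d : nat) := 'rV[int]_d.

Definition e (d : nat) (i : 'I_d) : pt d := delta_mx 0 i.

(* Integer sequences on Z^d; an element of R_d is a finitely supported one. *)
Definition seqZ (d : nat) := pt d -> int.

Definition finsupp (d : nat) (h : seqZ d) : Prop :=
  exists s : seq (pt d), forall n, h n != 0 -> n \in s.

(* The product f^(d,gamma) * h, where f = gamma - sum_i (u_i + u_i^-1):
   (f*h)_n = sum_k f_k h_(n-k) = gamma h_n - sum_i (h_(n - e_i) + h_(n + e_i)). *)
Definition fmul (d : nat) (gamma : int) (h : seqZ d) : seqZ d :=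
  fun n => gamma * h n - \sum_(i < d) (h (n - e i) + h (n + e i)).

Definition inLambda (d : nat) (gamma : int) (v : seqZ d) : Prop :=
  forall n, 0 <= v n < gamma.

Definition nbrs (d : nat) (n : pt d) : seq (pt d) :=
  [seq n + e i | i <- enum 'I_d] ++ [seq n - e i | i <- enum 'I_d].

Definition NF (d : nat) (F : seq (pt d)) (n : pt d) : nat :=
  size [seq m <- undup (nbrs n) | m \in F].

Definition recurrent (d : nat) (gamma : int) (v : seqZ d) : Prop :=
  inLambda gamma v /\
  forall F : seq (pt d), F != [::] ->
    exists2 n, n \in F & (NF F n)%:Z <= v n.

(* Main.v *)
Require Import Defs.
From HB Require Import structures.
From mathcomp Require Import all_boot all_order all_algebra.
From Stdlib Require Import Classical.
Import Order.TTheory GRing.Theory Num.Theory.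
Local Open Scope ring_scope.
Set Implicit Arguments. Unset Strict Implicit.

Lemma cnt_ord (d : nat) (p : pred 'I_d) : count p (Finite.enum 'I_d) = (\sum_(i < d) p i)%N.
Proof. by rewrite -enumT -sum1_count big_mkcond big_enum /=; apply: eq_bigr => i _; case: (p i). Qed.

Lemma e_at {d : nat} (i j : 'I_d) : e i 0 j = (i == j)%:R.
Proof. by rewrite /e mxE eqxx /= eq_sym. Qed.

Lemma e_inj (d : nat) : injective (@e d).
Proof. move=> i j H; have := e_at i i; rewrite H e_at eqxx. by case: eqP. Qed.

Lemma nbrs_uniq {d : nat} (n : pt d) : uniq (nbrs n).
Proof.
have i1 : injective (fun i => n + e i) by move=> i j /addrI /e_inj.
have i2 : injective (fun i => n - e i) by move=> i j /addrI /oppr_inj /e_inj.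
rewrite /nbrs cat_uniq (map_inj_uniq i1) (map_inj_uniq i2) enum_uniq /=.
rewrite ?andbT; apply/hasPn => m /mapP [i _ ->]; apply/mapP => -[j _] /addrI H.
have := congr1 (fun M : pt d => M 0 i) H; rewrite /= mxE !e_at eqxx.
by case: (j == i).
Qed.

Lemma NF_sum (d : nat) (F : seq (pt d)) (n : pt d) :
  (NF F n)%:Z = \sum_(i < d) ((n - e i \in F)%:Z + (n + e i \in F)%:Z).
Proof.
rewrite /NF undup_id ?nbrs_uniq // size_filter /nbrs count_cat !count_map !cnt_ord.
rewrite -(big_morph Posz PoszD (erefl 0%:Z)) -big_split /=.
by congr (Posz _); apply: eq_bigr => i _; rewrite addnC.
Qed.

Lemma maxlist (T : eqType) (f : T -> int) (s : seq T) :
  s != [::] -> exists2 x, x \in s & forall y, y \in s -> f y <= f x.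
Proof.
elim: s => [//|a s IH] _.
case: (eqVneq s [::]) => [-> | /IH [x xs Hx]].
  exists a; first by rewrite inE eqxx.
  by move=> y; rewrite inE => /eqP ->.
case: (leP (f a) (f x)) => H.
  exists x; first by rewrite inE xs orbT.
  by move=> y; rewrite inE => /orP [/eqP -> //| /Hx].
exists a; first by rewrite inE eqxx.
move=> y; rewrite inE => /orP [/eqP -> //| /Hx Hy].
exact: le_trans Hy (ltW H).
Qed.

Definition ind (d : nat) (F : seq (pt d)) : seqZ d := fun n => (n \in F)%:Z.

Lemma fmul_ind (d : nat) (g : int) (F : seq (pt d)) n :
  n \in F -> fmul g (ind F) n = g - (NF F n)%:Z.
Proof. by move=> nF; rewrite /fmul NF_sum /ind nF mulr1. Qed.

Lemma rec_from_ind (d : nat) (g : int) (v : seqZ d) : inLambda g v ->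
  (forall F : seq (pt d), F != [::] -> exists2 n, n \in F & g <= fmul g (ind F) n + v n) ->
  recurrent g v.
Proof.
move=> vL H; split=> // F FN; have [n nF Hn] := H F FN; exists n => //.
by move: Hn; rewrite fmul_ind // -addrA lerDl addrC subr_ge0.
Qed.

Lemma lemA (d gamma : nat) (v : seqZ d) : (2 * d <= gamma)%N -> recurrent gamma%:Z v ->
  forall h : seqZ d, finsupp h -> (exists n, 0 < h n) ->
  exists2 n, 0 < h n & gamma%:Z <= fmul gamma%:Z h n + v n.
Proof.
move=> hg [_ Hrec] h [s Hs] [n0 Hn0].
have n0s : n0 \in s by apply: Hs; rewrite gt_eqF.
have sN : s != [::] by case: s Hs n0s.
have [x xs Hx] := maxlist h sN.
set M := h x.
have hM : forall y, h y <= M.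
  move=> y; case: (eqVneq (h y) 0) => [->|/Hs ys]; last exact: Hx.
  exact: le_trans (ltW Hn0) (Hx _ n0s).
have Mpos : 0 < M := lt_le_trans Hn0 (hM n0).
set F := [seq y <- s | h y == M].
have xF : x \in F by rewrite mem_filter eqxx xs.
have FN : F != [::] by case: F xF.
have [n nF HN] := Hrec F FN.
have hn : h n = M by move: nF; rewrite mem_filter => /andP [/eqP].
have key : forall m, h m <= M - 1 + (m \in F)%:Z.
  move=> m; case mF: (m \in F).
    by move: mF; rewrite mem_filter => /andP [/eqP -> _]; rewrite subrK.
  rewrite addr0 -ltzD1 subrK lt_neqAle hM andbT.
  apply/eqP => E; have ms : m \in s by apply: Hs; rewrite E gt_eqF.
  by rewrite mem_filter E eqxx ms in mF.
exists n; first by rewrite hn.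
set K := M - 1.
have K0 : 0 <= K by rewrite subr_ge0 -(add0r 1) lezD1.
have HS : \sum_(i < d) (h (n - e i) + h (n + e i)) <= K *+ (2 * d) + (NF F n)%:Z.
  apply: le_trans (ler_sum _ (fun i _ => lerD (key (n - e i)) (key (n + e i)))) _.
  under eq_bigr do rewrite addrACA.
  rewrite big_split /= sumr_const card_ord NF_sum mulrnA mulr2n.
  done.
have Kg : K *+ (2 * d) <= K * gamma%:Z.
  by rewrite -mulr_natr natz ler_wpM2l // lez_nat.
have HS2 : \sum_(i < d) (h (n - e i) + h (n + e i)) <= K * gamma%:Z + v n.
  exact: le_trans HS (lerD Kg HN).
rewrite /fmul hn (_ : M = K + 1); last by rewrite subrK.
rewrite mulrDr mulr1 [_ * K + _]addrC -!addrA lerDl addrCA addrC subr_ge0 mulrC.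
exact: HS2.
Qed.

Lemma fmul_opp (d : nat) (g : int) (h : seqZ d) n :
  fmul g (fun m => - h m) n = - fmul g h n.
Proof.
rewrite /fmul.
have -> : \sum_(i < d) (- h (n - e i) + - h (n + e i)) = - \sum_(i < d) (h (n - e i) + h (n + e i)).
  by rewrite -sumrN; apply: eq_bigr => i _; rewrite opprD.
by rewrite mulrN opprK opprD opprK.
Qed.

Theorem proposition4p1 (d : nat) (gamma : nat) :
  (2 <= d)%N -> (2 * d <= gamma)%N ->
  (forall v : seqZ d, inLambda gamma%:Z v ->
     (recurrent gamma%:Z v <->
      (forall h : seqZ d, finsupp h ->
         (forall n, h n = 0 \/ h n = 1) -> (exists n, h n != 0) ->
         exists2 n, h n != 0 & gamma%:Z <= fmul gamma%:Z h n + v n))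
   /\ (recurrent gamma%:Z v <->
      (forall h : seqZ d, finsupp h -> (exists n, 0 < h n) ->
         exists2 n, 0 < h n & gamma%:Z <= fmul gamma%:Z h n + v n)))
  /\
  (forall v v' : seqZ d, recurrent gamma%:Z v -> recurrent gamma%:Z v' ->
     finsupp (fun n => v n - v' n) -> (exists n, v n - v' n != 0) ->
     ~ (exists2 g : seqZ d, finsupp g &
          forall n, v n - v' n = fmul gamma%:Z g n)).
Proof.
move=> d2 dg.
have indsupp : forall F : seq (pt d), finsupp (ind F).
  by move=> F; exists F => n; rewrite /ind; case: (n \in F).
have indnz : forall (F : seq (pt d)) n, ind F n != 0 -> n \in F.
  by move=> F n; rewrite /ind; case: (n \in F).
have indpos : forall F : seq (pt d), F != [::] -> exists n, 0 < ind F n.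
  by case=> // a F _; exists a; rewrite /ind inE eqxx.
split.
  move=> v vL; split; split.
  - move=> R h fh h01 [n hn].
    have hp : exists n, 0 < h n.
      by exists n; case: (h01 n) hn => ->; rewrite ?eqxx.
    have [m hm Hm] := lemA dg R fh hp.
    by exists m => //; rewrite gt_eqF.
  - move=> H; apply: rec_from_ind vL _ => F FN.
    have [a Fa] : exists a, a \in F by case: F FN => // a F _; exists a; rewrite inE eqxx.
    have aF : exists a, ind F a != 0 by exists a; rewrite /ind Fa.
    have h01 : forall n, ind F n = 0 \/ ind F n = 1.
      by move=> n; rewrite /ind; case: (n \in F); [right|left].
    have [n hn Hn] := H (ind F) (indsupp F) h01 aF.
    by exists n => //; apply: indnz.
  - by move=> R; apply: lemA.
  - move=> H; apply: rec_from_ind vL _ => F FN.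
    have [n hn Hn] := H (ind F) (indsupp F) (indpos F FN).
    by exists n => //; apply: indnz; rewrite gt_eqF.
move=> v v' R R' _ [n0 hn0] [g [s Hs] Hg].
case: (classic (exists n, g n != 0)) => [[n1 gn1] | Hno]; last first.
  have g0 : forall n, g n = 0.
    by move=> n; apply/eqP; apply: contraT => H; case: (Hno (ex_intro _ n H)).
  move: hn0; rewrite Hg /fmul g0 mulr0 big1 ?subrr ?eqxx // => i _.
  by rewrite !g0 addr0.
case: (ltgtP (g n1) 0) => Hg1; last by rewrite Hg1 eqxx in gn1.
- have fs : finsupp (fun m => - g m).
    by exists s => n; rewrite oppr_eq0; apply: Hs.
  have gp : exists n, 0 < - g n by exists n1; rewrite oppr_gt0.
  have [n _ Hn] := lemA dg R fs gp.
  move: Hn; rewrite fmul_opp -Hg opprB subrK.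
  by case: R' => /(_ n) /andP [_ L] _; rewrite leNgt L.
- have fs : finsupp g by exists s.
  have [n _ Hn] := lemA dg R' fs (ex_intro _ n1 Hg1).
  move: Hn; rewrite -Hg subrK.
  by case: R => /(_ n) /andP [_ L] _; rewrite leNgt L.
Qed.
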